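(* Let $M$ be a simple extended matrix with $n\geq 1$ rows, $m\geq 0$ left columns and $k\geq 1$ variables, $$M=\left[ \begin{array}{ccc|c} x_{11} & \cdots & x_{1m} & y_{1}\\ \vdots & & \vdots & \vdots\\ x_{n1} & \cdots & x_{nm} & y_{n}\end{array} \right],$$ and let $n'\geq 2$ be an integer. The following statements are equivalent: (a) $M\Rightarrow_{\mathsf{lex}}\mathsf{Cube}_{n'}$; (b) $M\Rightarrow_{\mathsf{lex}_\ast}\mathsf{Cube}_{n'}$; (c) $M\Rightarrow_{\mathsf{reg}}\mathsf{Cube}_{n'}$; (d) $M\Rightarrow_{\mathsf{reg}_\ast}\mathsf{Cube}_{n'}$; (e) $M\Rightarrow_{\mathsf{alg}}\mathsf{Cube}_{n'}$; (f) $M\Rightarrow_{\mathsf{alg}_\ast}\mathsf{Cube}_{n'}$; (g) $M\Rightarrow_{\mathsf{ess\,alg}}\mathsf{Cube}_{n'}$; (h) $M\Rightarrow_{\mathsf{ess\,alg}_\ast}\mathsf{Cube}_{n'}$; (i) $M\Rightarrow_{\mathsf{reg\,ess\,alg}}\mathsf{Cube}_{n'}$; (j) $M\Rightarrow_{\mathsf{reg\,ess\,alg}_\ast}\mathsf{Cube}_{n'}$; (k) there exist $i_1,\dots,i_{n'}\in\{1,\dots,n\}$ such that there is no $j\in\{1,\dots,m\}$ with $x_{i_aj}=y_{i_a}$ for every $a\in\{1,\dots,n'\}$; (l) there does not exist a function $p\colon\{0,1\}^m\to\{0,1\}$ making $(\{0,1\},p)$ an algebra of $\mathbb{V}_M$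 such that the induced power $(\{0,1\}^{n'},p^{n'})$ is compatible with the $n'$-ary relation $R_{n'}=\{0,1\}^{n'}\setminus\{(0,\dots,0)\}$ (i.e., $p^{n'}(r_1,\dots,r_m)\in R_{n'}$ for all $r_1,\dots,r_m\in R_{n'}$, where $p^{n'}$ is applied coordinatewise).
   Context: A simple extended matrix $M$ (with parameters $n\geq 1$, $m\geq 0$, $k\geq 1$) is an $n\times(m+1)$ array as displayed, whose entries $x_{ij}$ and $y_i$ are (not necessarily distinct) variables from $\{x_1,\dots,x_k\}$; the first $m$ columns are the left columns, the last is the right column. In a finitely complete category $\mathbb{C}$, an internal $n$-ary relation $r\colon R\rightarrowtail A^n$ (a monomorphism) is $M$-closed if for every object $B$ and every function $f\colon\{x_1,\dots,x_k\}\to\mathbb{C}(B,A)$ such that, for each $j\in\{1,\dots,m\}$, the morphism $(f(x_{1j}),\dots,f(x_{nj}))\colon B\to A^n$ factors through $r$, the morphism $(f(y_1),\dots,f(y_n))\colon B\to A^n$ also factors through $r$. $\mathbb{C}$ has $M$-closed relations if every internal $n$-ary relation is $M$-closed. (In a variety, internal relations are subalgebras $R\subseteq A^n$, and $M$-closedness means: for every $f\colon\{x_1,\dots,x_k\}\to A$, if all columns $(f(x_{1j}),\dots,f(x_{nj}))$ lie in $R$, then $(f(y_1),\dots,f(y_n))\in R$.) For a class $\mathcal{C}$ of finitely complete categories, $M_1\Rightarrow_{\mathcal{C}}M_2$ means every category in $\mathcal{C}$ with $M_1$-closed relations has $M_2$-closed relations. The classes are: $\mathsf{lex}$ = finitely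 complete categories; $\mathsf{reg}$ = regular categories (finitely complete, with coequalizers of kernel pairs and pullback-stable regular epimorphisms); $\mathsf{alg}$ = one-sorted finitary varieties of universal algebras; $\mathsf{ess\,alg}$ = essentially algebraic (equivalently, locally presentable) categories, i.e., categories equivalent to categories of models of a (many-sorted) essentially algebraic theory; $\mathsf{reg\,ess\,alg}$ = those essentially algebraic categories that are regular. A subscript $\ast$ denotes the subclass of pointed categories (having a zero object). For $n\geq 2$, $\mathsf{Cube}_{n}$ is the simple extended matrix with $n$ rows and variables $\{x_1,x_2\}$ whose $2^n-1$ left columns are all $n$-tuples of elements of $\{x_1,x_2\}$ except $(x_1,\dots,x_1)$, and whose right column is $(x_1,\dots,x_1)$. (A variety has $\mathsf{Cube}_n$-closed relations iff it has an $n$-cube term.) $\mathbb{V}_M$ is the variety with a single $m$-ary basic operation $p$ and axioms $p(x_{i1},\dots,x_{im})=y_i$ for $i=1,\dots,n$ (in the variables $x_1,\dots,x_k$). *)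

(* Defs.v *)
From Stdlib Require Import ProofIrrelevance.
From mathcomp Require Import all_boot.

Set Implicit Arguments.
Unset Strict Implicit.
Unset Printing Implicit Defensive.

Record Category := Cat {
  Obj : Type;
  Hom : Obj -> Obj -> Type;
  idm : forall A : Obj, Hom A A;
  comp : forall A B D : Obj, Hom B D -> Hom A B -> Hom A D;
  comp_idl : forall (A B : Obj) (f : Hom A B), comp (idm B) f = f;
  comp_idr : forall (A B : Obj) (f : Hom A B), comp f (idm A) = f;
  comp_assoc : forall (A B D E : Obj) (h : Hom D E) (g : Hom B D) (f : Hom A B),
      comp h (comp g f) = comp (comp h g) f
}.
Arguments Hom {c} A B.
Arguments idm {c} A.
Arguments comp {c A B D} g f.

Definition is_mono (C : Category) (A B : Obj C) (m : Hom A B) : Prop :=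
  forall (X : Obj C) (f g : Hom X A), comp m f = comp m g -> f = g.

Definition is_iso (C : Category) (A B : Obj C) (f : Hom A B) : Prop :=
  exists g : Hom B A, comp g f = idm A /\ comp f g = idm B.

Definition is_terminal (C : Category) (T : Obj C) : Prop :=
  forall X : Obj C, exists f : Hom X T, forall g : Hom X T, g = f.

Definition is_initial (C : Category) (I : Obj C) : Prop :=
  forall X : Obj C, exists f : Hom I X, forall g : Hom I X, g = f.

Definition pointed (C : Category) : Prop :=
  exists Z : Obj C, is_initial Z /\ is_terminal Z.

Definition is_pullback (C : Category) (A B D P : Obj C)
    (f : Hom A D) (g : Hom B D) (p1 : Hom P A) (p2 : Hom P B) : Prop :=
  comp f p1 = comp g p2 /\
  forall (Q : Obj C) (q1 : Hom Q A) (q2 : Hom Q B), comp f q1 = comp g q2 ->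
    exists u : Hom Q P, (comp p1 u = q1 /\ comp p2 u = q2) /\
      forall v : Hom Q P, comp p1 v = q1 -> comp p2 v = q2 -> v = u.

Definition finitely_complete (C : Category) : Prop :=
  (exists T : Obj C, is_terminal T) /\
  forall (A B D : Obj C) (f : Hom A D) (g : Hom B D),
    exists (P : Obj C) (p1 : Hom P A) (p2 : Hom P B), is_pullback f g p1 p2.

Definition is_coequalizer (C : Category) (R A Q : Obj C)
    (a b : Hom R A) (q : Hom A Q) : Prop :=
  comp q a = comp q b /\
  forall (Z : Obj C) (z : Hom A Z), comp z a = comp z b ->
    exists u : Hom Q Z, comp u q = z /\ forall v : Hom Q Z, comp v q = z -> v = u.

Definition is_regular_epi (C : Category) (A Q : Obj C) (e : Hom A Q) : Prop :=
  exists (R : Obj C) (a b : Hom R A), is_coequalizer a b e.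

Definition regular (C : Category) : Prop :=
  finitely_complete C /\
  (forall (A B : Obj C) (f : Hom A B) (K : Obj C) (k1 k2 : Hom K A),
      is_pullback f f k1 k2 -> exists (Q : Obj C) (q : Hom A Q), is_coequalizer k1 k2 q) /\
  (forall (A B D : Obj C) (e : Hom A D) (g : Hom B D) (P : Obj C)
          (p1 : Hom P A) (p2 : Hom P B),
      is_regular_epi e -> is_pullback e g p1 p2 -> is_regular_epi p2).

Definition is_power (C : Category) (A P : Obj C) (n : nat) (pr : 'I_n -> Hom P A) : Prop :=
  forall (B : Obj C) (f : 'I_n -> Hom B A),
    exists u : Hom B P, (forall i, comp (pr i) u = f i) /\
      forall v : Hom B P, (forall i, comp (pr i) v = f i) -> v = u.

Record Functor (C D : Category) := Fun {
  fobj : Obj C -> Obj D;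
  fmap : forall A B : Obj C, Hom A B -> Hom (fobj A) (fobj B);
  fmap_id : forall A : Obj C, fmap (idm A) = idm (fobj A);
  fmap_comp : forall (A B E : Obj C) (g : Hom B E) (f : Hom A B),
      fmap (comp g f) = comp (fmap g) (fmap f)
}.
Arguments fobj {C D} _ _.
Arguments fmap {C D} _ {A B} _.

Definition equivalent (C D : Category) : Prop :=
  exists F : Functor C D,
    (forall (A B : Obj C) (g : Hom (fobj F A) (fobj F B)), exists f : Hom A B, fmap F f = g) /\
    (forall (A B : Obj C) (f f' : Hom A B), fmap F f = fmap F f' -> f = f') /\
    (forall Y : Obj D, exists (X : Obj C) (i : Hom (fobj F X) Y), is_iso i).

(* rows n, left columns m, variables k; indices are 0-based:
   ent i j = x_{(i+1)(j+1)}, rcol i = y_{i+1}, variable v : 'I_k is x_{v+1} *)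
Record SEMatrix := SEM {
  rows : nat;
  lcols : nat;
  nvars : nat;
  ent : 'I_rows -> 'I_lcols -> 'I_nvars;
  rcol : 'I_rows -> 'I_nvars
}.
Arguments ent : clear implicits.
Arguments rcol : clear implicits.

Definition M_closed (C : Category) (M : SEMatrix) (A P : Obj C)
    (pr : 'I_(rows M) -> Hom P A) (R : Obj C) (r : Hom R P) : Prop :=
  forall (B : Obj C) (f : 'I_(nvars M) -> Hom B A),
    (forall j : 'I_(lcols M), exists h : Hom B R,
        forall i, comp (pr i) (comp r h) = f (ent M i j)) ->
    exists h : Hom B R, forall i, comp (pr i) (comp r h) = f (rcol M i).

Arguments M_closed {C} M {A P} pr {R} r.

Definition has_M_closed_relations (C : Category) (M : SEMatrix) : Prop :=
  forall (A P : Obj C) (pr : 'I_(rows M) -> Hom P A) (R : Obj C) (r : Hom R P),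
    is_power pr -> is_mono r -> @M_closed C M A P pr R r.

Definition implies_in (K : Category -> Prop) (M1 M2 : SEMatrix) : Prop :=
  forall C : Category, K C -> has_M_closed_relations C M1 -> has_M_closed_relations C M2.

(* Cube_n: variables x1 = ord0, x2 = 1; column j (0-based) is the tuple whose
   i-th entry is x2 iff bit i of j+1 is 1; j+1 ranges over 1 .. 2^n - 1,
   i.e. all tuples except (x1,...,x1), each exactly once. *)
Definition Cube (n : nat) : SEMatrix :=
  @SEM n (2 ^ n - 1) 2
    (fun (i : 'I_n) (j : 'I_(2 ^ n - 1)) => (inord (odd (j.+1 %/ 2 ^ i)) : 'I_2))
    (fun _ => ord0).

Record signature := Sig { sop : Type; sar : sop -> nat }.

Inductive term (Sg : signature) : Type :=
| tvar : nat -> term Sg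
| tapp : forall o : sop Sg, ('I_(sar o) -> term Sg) -> term Sg.

Fixpoint teval (Sg : signature) (A : Type) (ops : forall o : sop Sg, ('I_(sar o) -> A) -> A)
    (rho : nat -> A) (t : term Sg) : A :=
  match t with
  | tvar n => rho n
  | tapp o args => ops o (fun i => teval ops rho (args i))
  end.

Record eq_theory := EqTh {
  eq_sig : signature;
  eq_idx : Type;
  eq_lhs : eq_idx -> term eq_sig;
  eq_rhs : eq_idx -> term eq_sig
}.

Record valgebra (T : eq_theory) := VAlg {
  acar : Type;
  aop : forall o : sop (eq_sig T), ('I_(sar o) -> acar) -> acar;
  asat : forall (e : eq_idx T) (rho : nat -> acar),
      teval aop rho (eq_lhs e) = teval aop rho (eq_rhs e)
}.
Arguments aop {T} v o _.

Record vhom (T : eq_theory) (A B : valgebra T) := VHom {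
  vhfun : acar A -> acar B;
  vhmor : forall o (args : 'I_(sar o) -> acar A),
      vhfun (aop A o args) = aop B o (fun i => vhfun (args i))
}.

Lemma vhom_eq (T : eq_theory) (A B : valgebra T) (f g : vhom A B) :
  vhfun f = vhfun g -> f = g.
Proof.
case: f g => f pf [g pg] /= E; subst g; congr VHom; apply: proof_irrelevance.
Qed.

Definition vhom_id (T : eq_theory) (A : valgebra T) : vhom A A :=
  @VHom T A A (fun x => x) (fun o args => erefl).

Definition vhom_comp (T : eq_theory) (A B D : valgebra T) (g : vhom B D) (f : vhom A B) :
  vhom A D.
Proof.
refine (@VHom T A D (fun x => vhfun g (vhfun f x)) _).
by move=> o args; rewrite (vhmor f) (vhmor g).
Defined.

Definition VarietyCat (T : eq_theory) : Category.
Proof.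
refine (@Cat (valgebra T) (@vhom T) (@vhom_id T) (@vhom_comp T) _ _ _);
  by move=> *; apply: vhom_eq.
Defined.

Record ea_signature := EASig {
  ea_sort : Type;
  ea_op : Type;
  ea_ar : ea_op -> Type;
  ea_dom : forall o : ea_op, ea_ar o -> ea_sort;
  ea_cod : ea_op -> ea_sort
}.

Inductive eterm (Sg : ea_signature) (V : ea_sort Sg -> Type) : ea_sort Sg -> Type :=
| evar : forall s : ea_sort Sg, V s -> eterm V s
| eapp : forall o : ea_op Sg, (forall i : ea_ar o, eterm V (ea_dom i)) ->
           eterm V (ea_cod o).

Inductive only_total (Sg : ea_signature) (tot : ea_op Sg -> Prop) (V : ea_sort Sg -> Type) :
  forall s : ea_sort Sg, eterm V s -> Prop :=
| ot_var : forall (s : ea_sort Sg) (v : V s), @only_total Sg tot V s (@evar Sg V s v)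
| ot_app : forall (o : ea_op Sg) (args : forall i : ea_ar o, eterm V (ea_dom i)),
    tot o -> (forall i, @only_total Sg tot V (ea_dom i) (args i)) ->
    @only_total Sg tot V (ea_cod o) (@eapp Sg V o args).

Record ea_equation (Sg : ea_signature) (V : ea_sort Sg -> Type) := EAEq {
  eqn_sort : ea_sort Sg;
  eqn_lhs : eterm V eqn_sort;
  eqn_rhs : eterm V eqn_sort
}.

Definition std_vars (Sg : ea_signature) (o : ea_op Sg) : ea_sort Sg -> Type :=
  fun s => {i : ea_ar o | ea_dom i = s}.

Record ea_theory := EATh {
  ea_sig : ea_signature;
  ea_total : ea_op ea_sig -> Prop;
  ea_E : Type;
  ea_E_vars : ea_E -> ea_sort ea_sig -> Type;
  ea_E_eqn : forall e : ea_E, ea_equation (ea_E_vars e);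
  ea_Def_idx : ea_op ea_sig -> Type;
  ea_Def : forall o : ea_op ea_sig, ea_Def_idx o -> ea_equation (@std_vars ea_sig o);
  ea_Def_total : forall (o : ea_op ea_sig) (d : ea_Def_idx o),
      only_total ea_total (eqn_lhs (ea_Def d)) /\ only_total ea_total (eqn_rhs (ea_Def d))
}.

Arguments ea_total : clear implicits.
Arguments ea_E_vars : clear implicits.
Arguments ea_E_eqn : clear implicits.
Arguments ea_Def_idx : clear implicits.
Arguments ea_Def : clear implicits.

Record ea_palg (Sg : ea_signature) := EAPAlg {
  pcar : ea_sort Sg -> Type;
  pop : forall o : ea_op Sg, (forall i : ea_ar o, pcar (ea_dom i)) -> option (pcar (ea_cod o))
}.
Arguments pop {Sg} e o _.

Inductive peval (Sg : ea_signature) (A : ea_palg Sg) (V : ea_sort Sg -> Type)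
    (rho : forall s, V s -> pcar A s) : forall s : ea_sort Sg, eterm V s -> pcar A s -> Prop :=
| pev_var : forall (s : ea_sort Sg) (v : V s), @peval Sg A V rho s (@evar Sg V s v) (rho s v)
| pev_app : forall (o : ea_op Sg) (args : forall i : ea_ar o, eterm V (ea_dom i))
      (vals : forall i : ea_ar o, pcar A (ea_dom i)) (b : pcar A (ea_cod o)),
    (forall i, @peval Sg A V rho (ea_dom i) (args i) (vals i)) ->
    pop A o vals = Some b ->
    @peval Sg A V rho (ea_cod o) (@eapp Sg V o args) b.

Definition std_assign (Sg : ea_signature) (A : ea_palg Sg) (o : ea_op Sg)
    (a : forall i : ea_ar o, pcar A (ea_dom i)) : forall s, std_vars o s -> pcar A s :=
  fun s v => eq_rect _ (pcar A) (a (proj1_sig v)) s (proj2_sig v).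

Definition holds_def (Sg : ea_signature) (A : ea_palg Sg) (V : ea_sort Sg -> Type)
    (rho : forall s, V s -> pcar A s) (e : ea_equation V) : Prop :=
  exists b, @peval Sg A V rho _ (eqn_lhs e) b /\ @peval Sg A V rho _ (eqn_rhs e) b.

Definition holds_weak (Sg : ea_signature) (A : ea_palg Sg) (V : ea_sort Sg -> Type)
    (rho : forall s, V s -> pcar A s) (e : ea_equation V) : Prop :=
  forall b1 b2, @peval Sg A V rho _ (eqn_lhs e) b1 -> @peval Sg A V rho _ (eqn_rhs e) b2 -> b1 = b2.

Definition is_ea_model (T : ea_theory) (A : ea_palg (ea_sig T)) : Prop :=
  (forall o a, ea_total T o -> pop A o a <> None) /\
  (forall o a, ~ ea_total T o ->
     (pop A o a <> None <-> forall d : ea_Def_idx T o, holds_def (std_assign a) (ea_Def T o d))) /\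
  (forall (e : ea_E T) (rho : forall s, ea_E_vars T e s -> pcar A s), holds_weak rho (ea_E_eqn T e)).

Record ea_model (T : ea_theory) := EAMod {
  em_alg : ea_palg (ea_sig T);
  em_model : is_ea_model em_alg
}.

Record ea_hom (T : ea_theory) (A B : ea_model T) := EAHom {
  ehfun : forall s, pcar (em_alg A) s -> pcar (em_alg B) s;
  ehmor : forall o a b, pop (em_alg A) o a = Some b ->
      pop (em_alg B) o (fun i => ehfun (a i)) = Some (ehfun b)
}.

Lemma ea_hom_eq (T : ea_theory) (A B : ea_model T) (f g : ea_hom A B) :
  ehfun f = ehfun g -> f = g.
Proof.
case: f g => f pf [g pg] /= E; subst g; congr EAHom; apply: proof_irrelevance.
Qed.

Definition ea_hom_id (T : ea_theory) (A : ea_model T) : ea_hom A A :=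
  @EAHom T A A (fun s x => x) (fun o a b H => H).

Definition ea_hom_comp (T : ea_theory) (A B D : ea_model T) (g : ea_hom B D) (f : ea_hom A B) :
  ea_hom A D.
Proof.
refine (@EAHom T A D (fun s x => ehfun g (ehfun f x)) _).
by move=> o a b H; apply: (ehmor g); apply: (ehmor f).
Defined.

Definition ModelCat (T : ea_theory) : Category.
Proof.
refine (@Cat (ea_model T) (@ea_hom T) (@ea_hom_id T) (@ea_hom_comp T) _ _ _);
  by move=> *; apply: ea_hom_eq.
Defined.

Definition cls_lex (C : Category) : Prop := finitely_complete C.
Definition cls_reg (C : Category) : Prop := regular C.
Definition cls_alg (C : Category) : Prop := exists T : eq_theory, equivalent C (VarietyCat T).
Definition cls_essalg (C : Category) : Prop := exists T : ea_theory, equivalent C (ModelCat T).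
Definition cls_regessalg (C : Category) : Prop := cls_essalg C /\ regular C.
Definition cls_pt (K : Category -> Prop) (C : Category) : Prop := K C /\ pointed C.

(* ({0,1}, p) satisfies p(x_{i1},...,x_{im}) = y_i for all i  (0 = false, 1 = true) *)
Definition VM_algebra_bool (M : SEMatrix) (p : {ffun 'I_(lcols M) -> bool} -> bool) : Prop :=
  forall (f : 'I_(nvars M) -> bool) (i : 'I_(rows M)),
    p [ffun j => f (ent M i j)] = f (rcol M i).

(* p^n' preserves R_n' = {0,1}^n' \ {(0,...,0)} ; r j is the j-th argument in R_n' *)
Definition compatible_Rn (M : SEMatrix) (n' : nat) (p : {ffun 'I_(lcols M) -> bool} -> bool) : Prop :=
  forall r : 'I_(lcols M) -> 'I_n' -> bool,
    (forall j, exists a, r j a) -> exists a, p [ffun j => r j a].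

Arguments VM_algebra_bool : clear implicits.
Arguments compatible_Rn : clear implicits.

(* Main.v *)
Require Import Defs.
From mathcomp Require Import all_boot zify.
From Stdlib Require Import Classical ProofIrrelevance FunctionalExtensionality ClassicalEpsilon.
Set Implicit Arguments. Unset Strict Implicit. Unset Printing Implicit Defensive.
Local Notation comp := Defs.comp.

Definition condK (M : SEMatrix) (n' : nat) : Prop :=
  exists idx : 'I_n' -> 'I_(rows M),
    ~ exists j : 'I_(lcols M), forall a : 'I_n', ent M (idx a) j = rcol M (idx a).

Definition condL (M : SEMatrix) (n' : nat) : Prop :=
  ~ exists p : {ffun 'I_(lcols M) -> bool} -> bool,
      VM_algebra_bool M p /\ compatible_Rn M n' p.

Lemma K_L M n' : condK M n' -> condL M n'.
Proof.
move=> [idx Hidx] [p [HV HC]].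
have [|a Ha] := HC (fun j a => ent M (idx a) j != rcol M (idx a)).
  move=> j; apply: NNPP => H; apply: Hidx; exists j => a.
  by apply/eqP; apply: negbNE; apply/negP => Hn; apply: H; exists a.
have := HV (fun v => v != rcol M (idx a)) (idx a).
rewrite Ha eqxx => //.
Qed.

Definition pL (M : SEMatrix) (t : {ffun 'I_(lcols M) -> bool}) : bool :=
  ~~ [exists i : 'I_(rows M), [forall j, (ent M i j == rcol M i) ==> ~~ t j]].

Lemma notK_pL M n' : 2 <= n' -> ~ condK M n' ->
  VM_algebra_bool M (@pL M) /\ compatible_Rn M n' (@pL M).
Proof.
move=> Hn nK.
have HK : forall idx : 'I_n' -> 'I_(rows M),
   exists j, forall a, ent M (idx a) j = rcol M (idx a).
  by move=> idx; apply: NNPP => H; apply: nK; exists idx.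
split.
- move=> f i; rewrite /pL.
  case Hy: (f (rcol M i)).
  + apply/negP => /existsP [i' /forallP Hi'].
    have [j Hj] := HK (fun a : 'I_n' => if val a == 0 then i else i').
    have Ha1 : 1 < n' by [].
    have := Hj (Ordinal Ha1); have := Hj (Ordinal (ltnW Ha1)) => /= E0 E1.
    have := Hi' j; rewrite E1 eqxx /= ffunE E0 Hy //.
  + apply/negbF/existsP; exists i; apply/forallP => j; apply/implyP => /eqP E.
    by rewrite ffunE E Hy.
- move=> r Hr; apply: NNPP => H.
  have H' : forall a, exists i : 'I_(rows M),
     [forall j, (ent M i j == rcol M i) ==> ~~ [ffun j => r j a] j].
    move=> a; apply: NNPP => H2; apply: H; exists a; rewrite /pL.
    apply/negP => /existsP [i Hi]; apply: H2; exists i; exact: Hi.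
  have [idx Hidx] := fin_all_exists H'.
  have [j Hj] := HK idx.
  have [a Ha] := Hr j.
  have := forallP (Hidx a) j; rewrite Hj eqxx ffunE Ha //.
Qed.

Lemma L_K M n' : 2 <= n' -> condL M n' -> condK M n'.
Proof.
move=> Hn HL; apply: NNPP => nK; apply: HL; exists (@pL M); exact: notK_pL.
Qed.

Definition Nb (n : nat) (b : nat -> bool) := \sum_(a < n) b a * 2 ^ a.

Lemma NbS n b : Nb n.+1 b = b 0 + 2 * Nb n (fun k => b k.+1).
Proof.
rewrite /Nb big_ord_recl /= expn0 muln1 big_distrr /=; congr (_ + _).
by apply: eq_bigr => i _; rewrite /bump /= add1n expnS mulnCA.
Qed.

Lemma Nb_bit n b i : i < n -> odd (Nb n b %/ 2 ^ i) = b i.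
Proof.
elim: n b i => [//|n IH] b [|i] Hi.
  by rewrite expn0 divn1 NbS oddD oddM /=; case: (b 0).
rewrite NbS expnS divnMA (mulnC 2) divnDMl //.
rewrite (divn_small (m := b 0)) ?add0n; last by case: (b 0).
exact: IH.
Qed.

Lemma Nb_lt n b : Nb n b < 2 ^ n.
Proof.
elim: n b => [|n IH] b; first by rewrite /Nb big_ord0.
rewrite NbS expnS; have := IH (fun k => b k.+1); case: (b 0) => /= H; lia.
Qed.

Lemma Nb_pos n (b : nat -> bool) i : i < n -> b i -> 0 < Nb n b.
Proof.
elim: n b i => [//|n IH] b [|i] Hi Hb; rewrite NbS.
  by rewrite Hb.
have := IH (fun k => b k.+1) i Hi Hb; lia.
Qed.

Lemma cube_col n (b : 'I_n -> bool) : (exists a, b a) ->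
  exists c : 'I_(2 ^ n - 1), forall a : 'I_n, odd (c.+1 %/ 2 ^ a) = b a.
Proof.
move=> [a0 Ha0].
pose bb k := if (k < n) =P true is ReflectT H then b (Ordinal H) else false.
have Ebb : forall a : 'I_n, bb a = b a.
  move=> a; rewrite /bb; case: eqP => // H; last by rewrite ltn_ord in H.
  by congr b; apply: val_inj.
have Hpos := Nb_pos (ltn_ord a0) (etrans (Ebb a0) Ha0).
have Hlt := Nb_lt n bb.
have Hc : (Nb n bb).-1 < 2 ^ n - 1 by lia.
exists (Ordinal Hc) => a /=; rewrite prednK // Nb_bit //.
Qed.

Definition ord0_elim (X : Type) (i : 'I_0) : X.
Proof. by case: i. Defined.

Section CatLemmas.
Variable C : Category.

Lemma pullback_mono (A B D P : Obj C) (f : Hom A D) (g : Hom B D)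
  (p1 : Hom P A) (p2 : Hom P B) :
  is_pullback f g p1 p2 -> is_mono g -> is_mono p1.
Proof.
move=> [Hc Hu] Hg X u v E.
have E2 : comp p2 u = comp p2 v.
  apply: Hg; rewrite !comp_assoc -Hc -!comp_assoc E //.
have Hq : comp f (comp p1 v) = comp g (comp p2 v) by rewrite !comp_assoc Hc.
have [w [_ Hw]] := Hu X (comp p1 v) (comp p2 v) Hq.
by rewrite (Hw u E E2) (Hw v erefl erefl).
Qed.

Lemma fc_power : finitely_complete C ->
  forall (A : Obj C) n, exists P (pr : 'I_n -> Hom P A), is_power pr.
Proof.
move=> [[T HT] HP] A; elim=> [|n [Pn [prn Hn]]].
  exists T, (fun i => ord0_elim _ i) => B f.
  have [u Hu] := HT B; exists u; split => [[]//|v _]; exact: Hu.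
have [tP _] := HT Pn; have [tA _] := HT A.
have [Q [q1 [q2 [Hc Hu]]]] := HP _ _ _ tP tA.
exists Q, (fun i => match unlift ord_max i with Some j => comp (prn j) q1 | None => q2 end).
move=> B f.
have [un [Hun Hun']] := Hn B (fun j => f (lift ord_max j)).
have Hq : comp tP un = comp tA (f ord_max).
  have [t Ht] := HT B; by rewrite (Ht (comp tP un)) (Ht (comp tA _)).
have [u [[Hu1 Hu2] Hu']] := Hu B un (f ord_max) Hq.
exists u; split.
  move=> i; case: (unliftP ord_max i) => [j ->|->] //.
  by rewrite -comp_assoc Hu1 Hun.
move=> v Hv; apply: Hu'.
  apply: Hun' => j; rewrite comp_assoc -Hv liftK //.
by rewrite -Hv unlift_none.
Qed.

End CatLemmas.

Section Equiv.
Variables C D : Category.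

Lemma equiv_fc : equivalent C D -> finitely_complete D -> finitely_complete C.
Proof.
move=> [F [Hfull [Hfaith Hess]]] [[T HT] HP].
have isoinv : forall (X : Obj D) (Y : Obj D) (i : Hom X Y), is_iso i ->
   exists j : Hom Y X, comp j i = idm X /\ comp i j = idm Y by [].
split.
  have [X [i [j [Hji Hij]]]] := Hess T.
  exists X => Y.
  have [t _] := HT (fobj F Y).
  have [u Hu] := Hfull Y X (comp j t).
  exists u => g; apply: Hfaith; rewrite Hu.
  have [t' Ht'] := HT (fobj F Y).
  have : comp i (fmap F g) = comp i (comp j t) by rewrite (Ht' (comp i _)) (Ht' (comp i (comp j t))).
  move=> E; have := f_equal (fun h => comp j h) E.
  by rewrite !comp_assoc Hji !comp_idl.
move=> A B E f g.
have [Q [q1 [q2 [Hc Hu]]]] := HP _ _ _ (fmap F f) (fmap F g).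
have [X [i [j [Hji Hij]]]] := Hess Q.
have [p1 Hp1] := Hfull X A (comp q1 i).
have [p2 Hp2] := Hfull X B (comp q2 i).
exists X, p1, p2; split.
  by apply: Hfaith; rewrite !fmap_comp Hp1 Hp2 !comp_assoc Hc.
move=> Z z1 z2 Hz.
have Hz' : comp (fmap F f) (fmap F z1) = comp (fmap F g) (fmap F z2) by rewrite -!fmap_comp Hz.
have [u [[Hu1 Hu2] Hu']] := Hu _ _ _ Hz'.
have [v Hv] := Hfull Z X (comp j u).
have Hv1 : comp p1 v = z1.
  apply: Hfaith; rewrite fmap_comp Hv Hp1 -comp_assoc (comp_assoc i) Hij comp_idl //.
have Hv2 : comp p2 v = z2.
  apply: Hfaith; rewrite fmap_comp Hv Hp2 -comp_assoc (comp_assoc i) Hij comp_idl //.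
exists v; split => // w Hw1 Hw2; apply: Hfaith; rewrite Hv.
have -> : u = comp i (fmap F w).
  symmetry; apply: Hu'; rewrite comp_assoc -?Hp1 -?Hp2 -fmap_comp ?Hw1 ?Hw2 //.
by rewrite comp_assoc Hji comp_idl.
Qed.
End Equiv.

Lemma K_implies_cube (C : Category) (M : SEMatrix) (n' : nat) :
  finitely_complete C -> condK M n' ->
  has_M_closed_relations C M -> has_M_closed_relations C (Cube n').
Proof.
move=> Hfc [idx Hidx] HM A P pr R r Hpow Hmono B f Hcols.
have [E [pi Hpi]] := fc_power Hfc P (rows M).
have [g [Hg _]] := Hpow E (fun a => comp (pr a) (pi (idx a))).
have [S [s [t Hpb]]] := (proj2 Hfc) _ _ _ g r.
have Hs : is_mono s := pullback_mono Hpb Hmono.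
have HMc := HM P E pi S s Hpi Hs.
pose x2 : 'I_2 := inord 1.
have [F HF] : exists F : 'I_(nvars M) -> Hom B P, forall v a,
   comp (pr a) (F v) = if v == rcol M (idx a) then f ord0 else f x2.
  apply: (@fin_all_exists _ (fun _ => Hom B P) (fun v u => forall a, comp (pr a) u = if v == rcol M (idx a) then f ord0 else f x2)) => v.
  have [u [Hu _]] := Hpow B (fun a => if v == rcol M (idx a) then f ord0 else f x2).
  by exists u.
have [|h Hh] := HMc B F.
  move=> j.
  have [u [Hu _]] := Hpi B (fun i => F (ent M i j)).
  have [a0 Ha0] : exists a, ent M (idx a) j != rcol M (idx a).
    apply: NNPP => H; apply: Hidx; exists j => a; apply/eqP; apply: negbNE.
    by apply/negP => Hn; apply: H; exists a.
  have [c Hc] := cube_col (b := fun a => ent M (idx a) j != rcol M (idx a)) (ex_intro _ a0 Ha0).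
  have [hc Hhc] := Hcols c.
  have Hrc : comp r hc = comp g u.
    have [w [_ Hw]] := Hpow B (fun a => comp (pr a) (comp g u)).
    rewrite (Hw (comp g u) (fun _ => erefl)); apply: Hw => a.
    rewrite Hhc /= Hc comp_assoc Hg -comp_assoc Hu HF.
    case: eqP => _ /=; congr f; apply: val_inj; rewrite /= inordK //.
  have [hh [[Hh1 Hh2] _]] := (proj2 Hpb) B u hc (esym Hrc).
  by exists hh => i; rewrite Hh1 Hu.
exists (comp t h) => a /=.
rewrite (comp_assoc r) -(proj1 Hpb) !comp_assoc Hg.
by rewrite -!comp_assoc Hh HF eqxx.
Qed.

Section Var.
Variable T : eq_theory.
Local Notation Sg := (eq_sig T).
Local Notation VC := (VarietyCat T).

Lemma teval_morph (X : Type) (opsX : forall o : sop Sg, ('I_(sar o) -> X) -> X)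
  (B : valgebra T) (phi : X -> acar B)
  (Hphi : forall o args, phi (opsX o args) = aop B o (fun i => phi (args i)))
  rho (t : term Sg) :
  phi (teval opsX rho t) = teval (aop B) (fun n => phi (rho n)) t.
Proof.
elim: t => [n|o args IH] //=; rewrite Hphi; congr (aop B o); apply: functional_extensionality => i; exact: IH.
Qed.

Definition mk_valg (X : Type) (opsX : forall o : sop Sg, ('I_(sar o) -> X) -> X)
  (I : Type) (A : I -> valgebra T) (phi : forall i, X -> acar (A i))
  (Hhom : forall i o args, phi i (opsX o args) = aop (A i) o (fun k => phi i (args k)))
  (Hinj : forall x y, (forall i, phi i x = phi i y) -> x = y) : valgebra T.
Proof.
refine (@VAlg T X opsX _).
move=> e rho; apply: Hinj => i.
rewrite !(teval_morph (Hhom i)); exact: asat.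
Defined.

Definition mkhom (A B : valgebra T) (h : acar A -> acar B)
  (H : forall o args, h (aop A o args) = aop B o (fun i => h (args i))) : Hom (c := VC) A B :=
  @VHom T A B h H.

Lemma hom_ext (A B : valgebra T) (f g : Hom (c := VC) A B) :
  (forall x, vhfun f x = vhfun g x) -> f = g.
Proof. by move=> H; apply: vhom_eq; apply: functional_extensionality. Qed.

Lemma vhfun_comp (A B D : valgebra T) (g : Hom (c := VC) B D) (f : Hom (c := VC) A B) x :
  vhfun (comp g f) x = vhfun g (vhfun f x).
Proof. by []. Qed.

Lemma hom_eqP (A B : valgebra T) (f g : Hom (c := VC) A B) :
  f = g -> forall x, vhfun f x = vhfun g x.
Proof. by move=> ->. Qed.

Definition unit_alg : valgebra T.
Proof. refine (@VAlg T unit (fun _ _ => tt) _). by move=> *; case: (teval _ _ _); case: (teval _ _ _). Defined.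

Lemma unit_terminal : is_terminal (C := VC) unit_alg.
Proof.
move=> X; exists (@mkhom X unit_alg (fun _ => tt) (fun _ _ => erefl)) => g.
by apply: hom_ext => x; case: (vhfun g x).
Qed.

Section PB.
Variables (A B D : valgebra T) (f : vhom A D) (g : vhom B D).

Definition pbcar := {p : acar A * acar B | vhfun f p.1 = vhfun g p.2}.

Definition pbop (o : sop Sg) (args : 'I_(sar o) -> pbcar) : pbcar.
Proof.
refine (exist _ (aop A o (fun i => (proj1_sig (args i)).1), aop B o (fun i => (proj1_sig (args i)).2)) _).
rewrite /= !vhmor; congr (aop D o); apply: functional_extensionality => i.
exact: (proj2_sig (args i)).
Defined.

Definition pbphi (b : bool) : pbcar -> acar (if b then A else B) :=
  if b as b' return pbcar -> acar (if b' then A else B) then fun x => (proj1_sig x).1 else fun x => (proj1_sig x).2.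

Lemma pb_inj (x y : pbcar) : (forall b, pbphi b x = pbphi b y) -> x = y.
Proof.
move: x y => [[x1 x2] Hx] [[y1 y2] Hy] H.
have E1 := H true; have E2 := H false; simpl in E1, E2; subst.
by congr exist; apply: proof_irrelevance.
Qed.

Definition pb_alg : valgebra T.
Proof.
refine (@mk_valg pbcar pbop bool (fun b => if b then A else B) pbphi _ pb_inj).
by case.
Defined.

Definition pb1 : Hom (c := VC) pb_alg A := @mkhom pb_alg A (fun x => (proj1_sig x).1) (fun _ _ => erefl).
Definition pb2 : Hom (c := VC) pb_alg B := @mkhom pb_alg B (fun x => (proj1_sig x).2) (fun _ _ => erefl).

Lemma pb_is_pullback : is_pullback (C := VC) f g pb1 pb2.
Proof.
split.
  by apply: hom_ext => x; rewrite !vhfun_comp; exact: (proj2_sig x).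
move=> Q q1 q2 Hq.
have Hq' := hom_eqP Hq.
pose u (x : acar Q) : pbcar := exist _ (vhfun q1 x, vhfun q2 x) (Hq' x).
have Hu : forall o args, u (aop Q o args) = aop pb_alg o (fun i => u (args i)).
  move=> o args; apply: pb_inj; case.
    by rewrite /= vhmor.
  by rewrite /= vhmor.
exists (@mkhom Q pb_alg u Hu); split; first by split; apply: hom_ext.
move=> v Hv1 Hv2; apply: hom_ext => x; apply: pb_inj; case => /=.
  by rewrite -Hv1.
by rewrite -Hv2.
Qed.

Lemma pb_inj' (x y : acar pb_alg) : vhfun pb1 x = vhfun pb1 y -> vhfun pb2 x = vhfun pb2 y -> x = y.
Proof. by move=> H1 H2; apply: pb_inj; case. Qed.
End PB.
End Var.

Lemma fchoice (I : Type) (U : I -> Type) (P : forall i, U i -> Prop) :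
  (forall i, exists u, P i u) -> exists f : forall i, U i, forall i, P i (f i).
Proof.
move=> H; exists (fun i => proj1_sig (constructive_indefinite_description _ (H i))).
move=> i; exact: proj2_sig (constructive_indefinite_description _ (H i)).
Qed.

Section Var2.
Variable T : eq_theory.
Local Notation Sg := (eq_sig T).
Local Notation VC := (VarietyCat T).

Lemma var_fc : finitely_complete VC.
Proof.
split; first by exists (unit_alg T); exact: unit_terminal.
move=> A B D f g; exists (pb_alg f g), (pb1 f g), (pb2 f g); exact: pb_is_pullback.
Qed.

Lemma pb_cover (A B D P : valgebra T) (f : Hom (c := VC) A D) (g : Hom (c := VC) B D)
  (p1 : Hom (c := VC) P A) (p2 : Hom (c := VC) P B) :
  is_pullback f g p1 p2 -> forall a b, vhfun f a = vhfun g b ->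
  exists x, vhfun p1 x = a /\ vhfun p2 x = b.
Proof.
move=> [_ Hu] a b Hab.
have [w [[Hw1 Hw2] _]] := Hu _ _ _ (proj1 (pb_is_pullback f g)).
exists (vhfun w (exist _ (a, b) Hab)); split.
  by rewrite -vhfun_comp Hw1.
by rewrite -vhfun_comp Hw2.
Qed.

Section Kern.
Variables (I : Type) (P : valgebra T) (A : I -> valgebra T) (h : forall i, Hom (c := VC) P (A i)).

Definition kcar := {p : acar P * acar P | forall i, vhfun (h i) p.1 = vhfun (h i) p.2}.

Definition kmk (x y : acar P) (H : forall i, vhfun (h i) x = vhfun (h i) y) : kcar :=
  exist (fun p : acar P * acar P => forall i, vhfun (h i) p.1 = vhfun (h i) p.2) (x, y) H.

Definition kop (o : sop Sg) (args : 'I_(sar o) -> kcar) : kcar.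
Proof.
refine (exist _ (aop P o (fun k => (proj1_sig (args k)).1), aop P o (fun k => (proj1_sig (args k)).2)) _).
move=> i; rewrite /= !vhmor; congr (aop (A i) o); apply: functional_extensionality => k.
exact: (proj2_sig (args k)).
Defined.

Definition kphi (b : bool) : kcar -> acar P := fun x => if b then (proj1_sig x).1 else (proj1_sig x).2.

Lemma k_inj (x y : kcar) : (forall b, kphi b x = kphi b y) -> x = y.
Proof.
move: x y => [[x1 x2] Hx] [[y1 y2] Hy] H.
have E1 := H true; have E2 := H false; simpl in E1, E2; subst.
by congr exist; apply: proof_irrelevance.
Qed.

Definition k_alg : valgebra T.
Proof.
refine (@mk_valg T kcar kop bool (fun _ => P) kphi _ k_inj).
by case.
Defined.

Definition k1 : Hom (c := VC) k_alg P := @mkhom T k_alg P (fun x => (proj1_sig x).1) (fun _ _ => erefl).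
Definition k2 : Hom (c := VC) k_alg P := @mkhom T k_alg P (fun x => (proj1_sig x).2) (fun _ _ => erefl).

Lemma k_eq i : comp (h i) k1 = comp (h i) k2.
Proof. by apply: hom_ext => x; exact: (proj2_sig x i). Qed.
End Kern.

Lemma vmono_inj (A B : valgebra T) (r : Hom (c := VC) A B) :
  is_mono r -> forall x y, vhfun r x = vhfun r y -> x = y.
Proof.
move=> Hm x y Hxy.
have E := Hm _ _ _ (k_eq (fun _ : unit => r) tt).
pose z := kmk (h := fun _ : unit => r) (fun _ => Hxy).
by have := hom_eqP E z.
Qed.

Lemma vinj_mono (A B : valgebra T) (r : Hom (c := VC) A B) :
  (forall x y, vhfun r x = vhfun r y -> x = y) -> is_mono r.
Proof.
move=> Hi X u v E; apply: hom_ext => x; apply: Hi.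
by rewrite -!vhfun_comp E.
Qed.

Lemma vpower_inj (A P : valgebra T) n (pr : 'I_n -> Hom (c := VC) P A) :
  is_power pr -> forall x y, (forall i, vhfun (pr i) x = vhfun (pr i) y) -> x = y.
Proof.
move=> Hp x y Hxy.
have [w [_ Hw]] := Hp _ (fun i => comp (pr i) (k1 pr)).
have E1 := Hw (k1 pr) (fun _ => erefl).
have E2 := Hw (k2 pr) (fun i => esym (k_eq pr i)).
pose z := kmk Hxy.
have := hom_eqP (etrans E1 (esym E2)) z; by [].
Qed.

Section Img.
Variables (A B : valgebra T) (f : vhom A B).

Definition icar := {b : acar B | exists a, vhfun f a = b}.

Definition iop (o : sop Sg) (args : 'I_(sar o) -> icar) : icar.
Proof.
refine (exist _ (aop B o (fun k => proj1_sig (args k))) _).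
have [pre Hpre] := fchoice (fun k => proj2_sig (args k)).
exists (aop A o pre); rewrite vhmor; congr (aop B o); apply: functional_extensionality => k.
exact: Hpre.
Defined.

Lemma i_inj (x y : icar) : (forall b : unit, proj1_sig x = proj1_sig y) -> x = y.
Proof.
move: x y => [x Hx] [y Hy] /= H; have E := H tt; subst.
by congr exist; apply: proof_irrelevance.
Qed.

Definition i_alg : valgebra T.
Proof.
refine (@mk_valg T icar iop unit (fun _ => B) (fun _ x => proj1_sig x) _ i_inj).
by [].
Defined.

Definition iincl : Hom (c := VC) i_alg B := @mkhom T i_alg B (fun x => proj1_sig x) (fun _ _ => erefl).

Definition iq : Hom (c := VC) A i_alg.
Proof.
refine (@mkhom T A i_alg (fun a => exist _ (vhfun f a) (ex_intro _ a erefl)) _).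
move=> o args; apply: i_inj => _ /=; exact: vhmor.
Defined.

Lemma iq_surj : forall y : acar i_alg, exists a, vhfun iq a = y.
Proof.
move=> [y [a Ha]]; exists a; apply: i_inj => _ /=; exact: Ha.
Qed.
End Img.

Lemma coeq_surj (A B K : valgebra T) (q : Hom (c := VC) A B) (a b : Hom (c := VC) K A) :
  (forall y, exists x, vhfun q x = y) ->
  comp q a = comp q b ->
  (forall x y, vhfun q x = vhfun q y -> exists k, vhfun a k = x /\ vhfun b k = y) ->
  is_coequalizer a b q.
Proof.
move=> Hs Hab Hcov; split => // Z z Hz.
have Hz' := hom_eqP Hz.
have Hzq : forall x y, vhfun q x = vhfun q y -> vhfun z x = vhfun z y.
  move=> x y /Hcov [k [<- <-]]; exact: Hz'.
pose pre (y : acar B) := proj1_sig (constructive_indefinite_description _ (Hs y)).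
have Hpre : forall y, vhfun q (pre y) = y.
  move=> y; exact: (proj2_sig (constructive_indefinite_description _ (Hs y))).
have Hu : forall o args, vhfun z (pre (aop B o args)) = aop Z o (fun i => vhfun z (pre (args i))).
  move=> o args; rewrite -vhmor; apply: Hzq; rewrite Hpre vhmor; congr (aop B o).
  by apply: functional_extensionality => i; rewrite Hpre.
exists (@mkhom T B Z (fun y => vhfun z (pre y)) Hu); split.
  by apply: hom_ext => x /=; apply: Hzq; rewrite Hpre.
move=> v Hv; apply: hom_ext => y /=.
by rewrite -{1}(Hpre y) -vhfun_comp Hv.
Qed.

Lemma regepi_surj (A B : valgebra T) (e : Hom (c := VC) A B) :
  is_regular_epi e -> forall y, exists x, vhfun e x = y.
Proof.
move=> [R [a [b [Hab Hu]]]].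
have Hqab : comp (iq e) a = comp (iq e) b.
  apply: hom_ext => x; apply: i_inj => _ /=; exact: (hom_eqP Hab x).
have [u [Hu1 _]] := Hu _ _ Hqab.
have [v [_ Hv]] := Hu _ _ Hab.
have E1 : comp (iincl e) u = v.
  apply: Hv; rewrite -comp_assoc Hu1; by apply: hom_ext.
have E2 : idm (c := VC) B = v by apply: Hv; rewrite comp_idl.
move=> y; have := hom_eqP (etrans E1 (esym E2)) y => /= <-.
exact: (proj2_sig (vhfun u y)).
Qed.

Lemma var_regular : regular VC.
Proof.
split; first exact: var_fc.
split.
  move=> A B f K a b Hpb; exists (i_alg f), (iq f); apply: coeq_surj.
  - exact: iq_surj.
  - apply: hom_ext => x; apply: i_inj => _ /=; exact: (hom_eqP (proj1 Hpb) x).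
  - move=> x y Hxy; apply: (pb_cover Hpb).
    by have := f_equal (@proj1_sig _ _) Hxy.
move=> A B D e g P p1 p2 He Hpb.
have Hs := regepi_surj He.
exists (k_alg (fun _ : unit => p2)), (k1 (fun _ : unit => p2)), (k2 (fun _ : unit => p2)).
apply: coeq_surj.
- move=> y; have [x Hx] := Hs (vhfun g y).
  have [w [_ Hw]] := pb_cover Hpb Hx; by exists w.
- exact: k_eq tt.
- move=> x y Hxy; exists (kmk (h := fun _ : unit => p2) (fun _ => Hxy)); by [].
Qed.
End Var2.

Lemma some_bit n (c : 'I_(2 ^ n - 1)) : exists a : 'I_n, odd (c.+1 %/ 2 ^ a).
Proof.
have Hc := ltn_ord c.
set N := c.+1.
have HN : 0 < N by [].
have H1 := trunc_logP (isT : 1 < 2) HN.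
have H2 := trunc_log_ltn N (isT : 1 < 2).
have Ha : trunc_log 2 N < n.
  rewrite -(ltn_exp2l _ _ (isT : 1 < 2)); apply: leq_ltn_trans H1 _; rewrite /N; lia.
exists (Ordinal Ha) => /=.
have -> : N %/ 2 ^ trunc_log 2 N = 1.
  apply/eqP; rewrite eqn_leq; apply/andP; split.
    by rewrite -ltnS ltn_divLR ?expn_gt0 // -expnS.
  by rewrite leq_divRL ?expn_gt0 // mul1n.
by [].
Qed.

Section Counter.
Variable M : SEMatrix.

Definition sig0 : signature := @Sig bool (fun b => if b then lcols M else 0).

Definition T0 : eq_theory :=
  @EqTh sig0 'I_(rows M)
    (fun i => @tapp sig0 true (fun j : 'I_(lcols M) => tvar sig0 (val (ent M i j))))
    (fun i => tvar sig0 (val (rcol M i))).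

Local Notation VC := (VarietyCat T0).

Definition econst (X : valgebra T0) : acar X := aop X false (fun i => ord0_elim _ i).

Lemma ops0 (X : valgebra T0) (args : 'I_(sar (s := sig0) false) -> acar X) :
  aop X false args = econst X.
Proof. by rewrite /econst; congr (aop X false); apply: functional_extensionality => -[]. Qed.

Lemma pointed_T0 : 1 <= rows M -> pointed VC.
Proof.
move=> Hr; exists (unit_alg T0); split; last exact: unit_terminal.
move=> X.
have Hh : forall (o : sop sig0) (args : 'I_(sar o) -> unit), econst X = aop X o (fun i => econst X).
  case=> args; last by rewrite ops0.
  have := @asat T0 X (Ordinal Hr) (fun _ => econst X); by move=> /= ->.
exists (@mkhom T0 (unit_alg T0) X (fun _ => econst X) Hh) => g.
apply: hom_ext => -[] /=.
have -> : tt = aop (unit_alg T0) false (fun i => ord0_elim _ i) by [].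
by rewrite vhmor ops0.
Qed.

Definition rho_of (X : valgebra T0) (F : 'I_(nvars M) -> acar X) (n : nat) : acar X :=
  if (n < nvars M) =P true is ReflectT H then F (Ordinal H) else econst X.

Lemma rho_ofE (X : valgebra T0) (F : 'I_(nvars M) -> acar X) (v : 'I_(nvars M)) : rho_of F (val v) = F v.
Proof.
rewrite /rho_of; case: eqP => H; last by rewrite ltn_ord in H.
by congr F; apply: val_inj.
Qed.

Lemma T0_eq (X : valgebra T0) (F : 'I_(nvars M) -> acar X) (i : 'I_(rows M)) :
  aop X true (fun j => F (ent M i j)) = F (rcol M i).
Proof.
have := @asat T0 X i (rho_of F) => /=; rewrite rho_ofE.
move=> <-; congr (aop X true); apply: functional_extensionality => j; by rewrite rho_ofE.
Qed.

Lemma Mclosed_T0 : has_M_closed_relations VC M.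
Proof.
move=> A P pr R r Hp Hm B f Hcols.
have [hs Hhs] := fin_all_exists Hcols.
pose h x := aop R true (fun j => vhfun (hs j) x).
have Hh : forall x i, vhfun (pr i) (vhfun r (h x)) = vhfun (f (rcol M i)) x.
  move=> x i; rewrite /h !vhmor -(T0_eq (fun v => vhfun (f v) x)).
  congr (aop A true); apply: functional_extensionality => j.
  by have := hom_eqP (Hhs j i) x.
have Hhom : forall o args, h (aop B o args) = aop R o (fun k => h (args k)).
  move=> o args; apply: (vmono_inj Hm); apply: (vpower_inj Hp) => i.
  rewrite Hh !vhmor; congr (aop A o); apply: functional_extensionality => k.
  by rewrite Hh.
exists (@mkhom T0 B R h Hhom) => i; apply: hom_ext => x /=; exact: Hh x i.
Qed.

Definition qB (t : {ffun 'I_(lcols M) -> bool}) : bool :=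
  ~~ pL [ffun j => ~~ t j].

End Counter.

Section Counter2.
Variables (M : SEMatrix) (n' : nat).
Hypothesis Hn : 2 <= n'.
Hypothesis Hr : 1 <= rows M.
Hypothesis nK : ~ condK M n'.
Local Notation VC := (VarietyCat (T0 M)).

Lemma qB_VM (f : 'I_(nvars M) -> bool) i : qB [ffun j => f (ent M i j)] = f (rcol M i).
Proof.
have [HV _] := notK_pL Hn nK.
rewrite /qB -[f (rcol M i)]negbK -(HV (fun v => ~~ f v) i); congr (~~ pL _).
by apply/ffunP => j; rewrite !ffunE.
Qed.

Lemma qB_compat (r : 'I_(lcols M) -> 'I_n' -> bool) :
  (forall j, exists a, r j a = false) -> exists a, qB [ffun j => r j a] = false.
Proof.
move=> Hr'; have [_ HC] := notK_pL Hn nK.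
have [a Ha] := HC (fun j a => ~~ r j a) (fun j => let: ex_intro a Ha := Hr' j in ex_intro _ a (introT negPf Ha)).
exists a; rewrite /qB.
suff -> : [ffun j => ~~ [ffun j0 => r j0 a] j] = [ffun j => ~~ r j a] by rewrite Ha.
by apply/ffunP => j; rewrite !ffunE.
Qed.

Lemma qB0 : qB [ffun j : 'I_(lcols M) => false] = false.
Proof. by have := qB_VM (fun _ => false) (Ordinal Hr). Qed.

Definition A2op (o : sop (sig0 M)) : ('I_(sar o) -> bool) -> bool :=
  match o return ('I_(sar (s := sig0 M) o) -> bool) -> bool with
  | true => fun args => qB [ffun j => args j]
  | false => fun _ => false
  end.

Definition A2 : valgebra (T0 M).
Proof.
refine (@VAlg (T0 M) bool A2op _).
move=> i rho /=; rewrite -(qB_VM (fun v => rho (val v))); congr qB; apply/ffunP => j; by rewrite !ffunE.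
Defined.

Definition P2op (o : sop (sig0 M)) (args : 'I_(sar o) -> ('I_n' -> bool)) : 'I_n' -> bool :=
  fun a => A2op (fun k => args k a).

Definition P2 : valgebra (T0 M).
Proof.
refine (@mk_valg (T0 M) ('I_n' -> bool) P2op 'I_n' (fun _ => A2) (fun a x => x a) _ _).
  by [].
by move=> x y H; apply: functional_extensionality.
Defined.

Definition pr2 (a : 'I_n') : Hom (c := VC) P2 A2 := @mkhom (T0 M) P2 A2 (fun x => x a) (fun _ _ => erefl).

Definition pmap (B : valgebra (T0 M)) (fs : 'I_n' -> Hom (c := VC) B A2) : Hom (c := VC) B P2.
Proof.
refine (@mkhom (T0 M) B P2 (fun x a => vhfun (fs a) x) _).
move=> o args; apply: functional_extensionality => a /=; by rewrite vhmor.
Defined.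

Lemma pr2_power : is_power pr2.
Proof.
move=> B fs; exists (pmap fs); split; first by move=> a; apply: hom_ext.
move=> v Hv; apply: hom_ext => x /=; apply: functional_extensionality => a.
by rewrite -(Hv a).
Qed.

Definition R2car := {x : 'I_n' -> bool | exists a, x a = false}.

Definition R2op (o : sop (sig0 M)) (args : 'I_(sar o) -> R2car) : R2car.
Proof.
refine (exist _ (P2op (fun k => proj1_sig (args k))) _).
have a0 : 'I_n' by exists 0; apply: leq_trans Hn.
case: o args => args /=.
  by apply: qB_compat => j; exact: (proj2_sig (args j)).
by exists a0.
Defined.

Lemma R2_inj (x y : R2car) : (forall b : unit, proj1_sig x = proj1_sig y) -> x = y.
Proof.
move: x y => [x Hx] [y Hy] /= H; have E := H tt; subst.
by congr exist; apply: proof_irrelevance.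
Qed.

Definition R2 : valgebra (T0 M).
Proof.
refine (@mk_valg (T0 M) R2car R2op unit (fun _ => P2) (fun _ x => proj1_sig x) _ R2_inj).
by [].
Defined.

Definition r2 : Hom (c := VC) R2 P2 := @mkhom (T0 M) R2 P2 (fun x => proj1_sig x) (fun _ _ => erefl).

Lemma r2_mono : is_mono r2.
Proof. apply: vinj_mono => x y H; apply: R2_inj => _; exact: H. Qed.

Definition corestr (B : valgebra (T0 M)) (w : Hom (c := VC) B P2)
  (H : forall x, exists a, vhfun w x a = false) : Hom (c := VC) B R2.
Proof.
refine (@mkhom (T0 M) B R2 (fun x => exist _ (vhfun w x) (H x)) _).
move=> o args; apply: R2_inj => _ /=; by rewrite vhmor.
Defined.

Definition cst2 : Hom (c := VC) A2 A2.
Proof.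
refine (@mkhom (T0 M) A2 A2 (fun _ => false) _).
move=> o args; case: o args => args /=; last by []. 
by rewrite qB0.
Defined.

Lemma notcube_T0 : ~ has_M_closed_relations VC (Cube n').
Proof.
move=> H.
have HM := H A2 P2 pr2 R2 r2 pr2_power r2_mono.
pose f (c : 'I_2) : Hom (c := VC) A2 A2 := if c == ord0 then idm (c := VC) A2 else cst2.
have [|h Hh] := HM A2 f.
  move=> c.
  have Hw : forall x, exists a, vhfun (pmap (fun a => f (ent (Cube n') a c))) x a = false.
    move=> x; have [a Ha] := some_bit c; exists a => /=.
    rewrite /f; case: eqP => // E.
    by have := f_equal val E; rewrite /= Ha inordK.
  exists (corestr Hw) => a; by apply: hom_ext.
have [a Ha] := proj2_sig (vhfun h true).
have := hom_eqP (Hh a) true; rewrite /= Ha //.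
Qed.

End Counter2.

Definition copt (U : Type) (P : U -> Prop) : option U :=
  match excluded_middle_informative (exists u, P u) with
  | left H => Some (proj1_sig (constructive_indefinite_description _ H))
  | right _ => None
  end.

Lemma copt_some U (P : U -> Prop) u : copt P = Some u -> P u.
Proof.
rewrite /copt; case: excluded_middle_informative => // H [<-].
exact: proj2_sig (constructive_indefinite_description _ H).
Qed.

Lemma copt_none U (P : U -> Prop) : copt P = None -> ~ exists u, P u.
Proof. by rewrite /copt; case: excluded_middle_informative. Qed.

Section PevalInv.
Variables (Sg : ea_signature) (A : ea_palg Sg) (V : ea_sort Sg -> Type)
  (rho : forall s, V s -> pcar A s).

Definition inv_P (s : ea_sort Sg) (t : eterm V s) : pcar A s -> Prop :=
  match t in eterm _ s0 return pcar A s0 -> Prop with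
  | evar s v => fun b => b = rho v
  | eapp o args => fun b => exists vals : (forall i, pcar A (ea_dom i)),
      (forall i, peval rho (args i) (vals i)) /\ pop A o vals = Some b
  end.

Lemma peval_inv s (t : eterm V s) b : peval rho t b -> inv_P t b.
Proof. case=> [s' v|o args vals b' Hv Hp] /=; [by []|by exists vals]. Qed.
End PevalInv.

Section Model.
Variable T : ea_theory.
Local Notation Sg := (ea_sig T).
Local Notation MC := (ModelCat T).
Local Notation sort := (ea_sort Sg).

Section Mk.
Variables (Xc : sort -> Type) (I : Type) (A : I -> ea_model T)
  (phi : forall i s, Xc s -> pcar (em_alg (A i)) s).
Hypothesis Hinj : forall s (x y : Xc s), (forall i, phi i x = phi i y) -> x = y.
Hypothesis Hclos : forall o (a : forall k : ea_ar o, Xc (ea_dom k)),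
  (forall i, exists c, pop (em_alg (A i)) o (fun k => phi i (a k)) = Some c) ->
  exists b, forall i, pop (em_alg (A i)) o (fun k => phi i (a k)) = Some (phi i b).

Definition mk_palg : ea_palg Sg :=
  @EAPAlg Sg Xc (fun o a => copt (fun b : Xc (ea_cod o) =>
     forall i, pop (em_alg (A i)) o (fun k => phi i (a k)) = Some (phi i b))).

Lemma mk_pop1 o a b : pop mk_palg o a = Some b ->
  forall i, pop (em_alg (A i)) o (fun k => phi i (a k)) = Some (phi i b).
Proof. exact: copt_some. Qed.

Lemma mk_pop2 o a : (forall i, exists c, pop (em_alg (A i)) o (fun k => phi i (a k)) = Some c) ->
  pop mk_palg o a <> None.
Proof. by move=> /Hclos H /copt_none. Qed.

Lemma mk_proj V (rho : forall s, V s -> Xc s) s (t : eterm V s) b :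
  @peval Sg mk_palg V rho s t b -> forall i, peval (A := em_alg (A i)) (fun s v => phi i (rho s v)) t (phi i b).
Proof.
elim=> [s' v|o args vals b' Hv IH Hp] i; first by constructor.
econstructor; first by move=> k; exact: IH k i.
exact: mk_pop1 Hp i.
Qed.

Lemma mk_lift V (rho : forall s, V s -> Xc s) s (t : eterm V s) (c : forall i, pcar (em_alg (A i)) s) :
  (forall i, peval (A := em_alg (A i)) (fun s v => phi i (rho s v)) t (c i)) ->
  exists b, @peval Sg mk_palg V rho s t b /\ forall i, phi i b = c i.
Proof.
elim: t c => [s' v|o args IH] c Hc.
  exists (rho s' v); split; first by constructor.
  by move=> i; have := peval_inv (Hc i) => /= ->.
have [vals Hvals] := fchoice (fun i => peval_inv (Hc i)).
have Hk : forall k : ea_ar o, exists bk : Xc (ea_dom k), peval (A := mk_palg) rho (args k) bk /\ forall i, phi i bk = vals i k.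
  by move=> k; apply: IH => i; exact: (proj1 (Hvals i) k).
have [bs Hbs] := fchoice Hk.
have Ephi : forall i, (fun k => phi i (bs k)) = vals i.
  by move=> i; apply: functional_extensionality_dep => k; exact: (proj2 (Hbs k) i).
case E: (pop mk_palg o bs) => [b|]; last first.
  exfalso; apply: (mk_pop2 (a := bs)) E => i; exists (c i); rewrite Ephi; exact: (proj2 (Hvals i)).
exists b; split; first by econstructor; [move=> k; exact: (proj1 (Hbs k))|exact: E].
move=> i; have := mk_pop1 E i; rewrite Ephi (proj2 (Hvals i)) => -[->] //.
Qed.

Lemma std_assign_phi i o (a : forall k : ea_ar o, Xc (ea_dom k)) :
  std_assign (A := em_alg (A i)) (fun k => phi i (a k)) =
  (fun s v => phi i (std_assign (A := mk_palg) a v)).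
Proof.
apply: functional_extensionality_dep => s; apply: functional_extensionality => -[k e].
by rewrite /std_assign /=; case: s / e.
Qed.

Lemma mk_is_model : is_ea_model mk_palg.
Proof.
split; last split.
- move=> o a Ho; apply: mk_pop2 => i.
  case E: (pop (em_alg (A i)) o (fun k => phi i (a k))) => [c|]; first by exists c.
  by have := (proj1 (em_model (A i))) o _ Ho E.
- move=> o a Ho; split.
  + case E: (pop mk_palg o a) => [b|] // _ d.
    have Hd : forall i, holds_def (std_assign (A := em_alg (A i)) (fun k => phi i (a k))) (ea_Def T o d).
      move=> i; apply: (proj1 ((proj1 (proj2 (em_model (A i)))) o _ Ho)).
      by rewrite (mk_pop1 E i).
    have [c1 Hc1] := fchoice (fun i => Hd i).
    rewrite /holds_def in Hc1.
    have [b1 [Hb1 E1]] := @mk_lift _ (std_assign (A := mk_palg) a) _ _ (fun i => c1 i)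
       (fun i => let H := proj1 (Hc1 i) in eq_ind _ (fun r => peval r _ _) H _ (std_assign_phi i a)).
    have [b2 [Hb2 E2]] := @mk_lift _ (std_assign (A := mk_palg) a) _ _ (fun i => c1 i)
       (fun i => let H := proj2 (Hc1 i) in eq_ind _ (fun r => peval r _ _) H _ (std_assign_phi i a)).
    exists b1; split => //.
    have -> : b1 = b2 by apply: Hinj => i; rewrite E1 E2.
    exact: Hb2.
  + move=> Hd; apply: mk_pop2 => i.
    have Hd' : forall d, holds_def (std_assign (A := em_alg (A i)) (fun k => phi i (a k))) (ea_Def T o d).
      move=> d; have [b [H1 H2]] := Hd d; exists (phi i b); rewrite std_assign_phi; split.
        exact: mk_proj H1 i.
      exact: mk_proj H2 i.
    have := (proj2 ((proj1 (proj2 (em_model (A i)))) o _ Ho)) Hd'.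
    by case: (pop _ o _) => [c _|//]; exists c.
- move=> e rho b1 b2 H1 H2; apply: Hinj => i.
  exact: (proj2 (proj2 (em_model (A i)))) e _ _ _ (mk_proj H1 i) (mk_proj H2 i).
Qed.

Definition mk_model : ea_model T := @EAMod T mk_palg mk_is_model.

Definition mk_phi_hom i : Hom (c := MC) mk_model (A i).
Proof.
refine (@EAHom T mk_model (A i) (phi i) _).
move=> o a b H; exact: mk_pop1 H i.
Defined.

Definition mk_into (Q : ea_model T) (h : forall s, pcar (em_alg Q) s -> Xc s)
  (Hh : forall i o a b, pop (em_alg Q) o a = Some b ->
     pop (em_alg (A i)) o (fun k => phi i (h _ (a k))) = Some (phi i (h _ b))) :
  Hom (c := MC) Q mk_model.
Proof.
refine (@EAHom T Q mk_model h _).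
move=> o a b Hab.
case E: (pop mk_palg o (fun k => h _ (a k))) => [u|].
  congr Some; apply: Hinj => i.
  by have := mk_pop1 E i; rewrite (Hh i o a b Hab) => -[].
exfalso; apply: (mk_pop2 (a := fun k => h _ (a k))) E => i; exists (phi i (h _ b)); exact: Hh.
Defined.

End Mk.
End Model.

Section MFC.
Variable T : ea_theory.
Local Notation Sg := (ea_sig T).
Local Notation MC := (ModelCat T).
Local Notation sort := (ea_sort Sg).

Lemma mhom_ext (A B : ea_model T) (f g : Hom (c := MC) A B) :
  (forall s x, ehfun f (s := s) x = ehfun g x) -> f = g.
Proof.
move=> H; apply: ea_hom_eq; apply: functional_extensionality_dep => s.
apply: functional_extensionality => x; exact: H.
Qed.

Lemma mhom_eqP (A B : ea_model T) (f g : Hom (c := MC) A B) :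
  f = g -> forall s x, ehfun f (s := s) x = ehfun g x.
Proof. by move=> ->. Qed.

Definition eA (i : Empty_set) : ea_model T := match i with end.
Definition ephi (i : Empty_set) : forall s, unit -> pcar (em_alg (eA i)) s :=
  match i with end.
Lemma einj s (x y : unit) : (forall i, ephi i s x = ephi i s y) -> x = y.
Proof. by case: x; case: y. Qed.
Lemma eclos o (a : forall k : ea_ar o, unit) :
  (forall i, exists c, pop (em_alg (eA i)) o (fun k => ephi i _ (a k)) = Some c) ->
  exists b, forall i, pop (em_alg (eA i)) o (fun k => ephi i _ (a k)) = Some (ephi i _ b).
Proof. by move=> _; exists tt; case. Qed.

Definition term_model : ea_model T := @mk_model T (fun _ => unit) Empty_set eA ephi einj eclos.

Lemma term_model_terminal : is_terminal (C := MC) term_model.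
Proof.
move=> Q.
have Hh : forall (i : Empty_set) (o : ea_op Sg) (a : forall k : ea_ar o, pcar (em_alg Q) (ea_dom k)) (b : pcar (em_alg Q) (ea_cod o)), pop (em_alg Q) o a = Some b ->
   pop (em_alg (eA i)) o (fun k => ephi i _ tt) = Some (ephi i _ tt).
  by move=> [].

exists (@mk_into T (fun _ => unit) Empty_set eA ephi einj eclos Q (fun _ _ => tt) Hh).
move=> g; apply: mhom_ext => s x; by case: (ehfun g x).
Qed.

Section PB.
Variables (A B D : ea_model T) (f : Hom (c := MC) A D) (g : Hom (c := MC) B D).

Definition pXc (s : sort) := {p : pcar (em_alg A) s * pcar (em_alg B) s | ehfun f p.1 = ehfun g p.2}.
Definition pA (b : bool) : ea_model T := if b then A else B.
Definition pphi (b : bool) (s : sort) (x : pXc s) : pcar (em_alg (pA b)) s :=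
  match b as b' return pcar (em_alg (pA b')) s with
  | true => (proj1_sig x).1 | false => (proj1_sig x).2 end.

Lemma pinj s (x y : pXc s) : (forall b, pphi b x = pphi b y) -> x = y.
Proof.
move: x y => [[x1 x2] Hx] [[y1 y2] Hy] H.
have E1 := H true; have E2 := H false; simpl in E1, E2; subst.
by congr exist; apply: proof_irrelevance.
Qed.

Lemma pclos o (a : forall k : ea_ar o, pXc (ea_dom k)) :
  (forall i, exists c, pop (em_alg (pA i)) o (fun k => pphi i (a k)) = Some c) ->
  exists b, forall i, pop (em_alg (pA i)) o (fun k => pphi i (a k)) = Some (pphi i b).
Proof.
move=> H; have [cA HA] := H true; have [cB HB] := H false.
simpl in HA, HB.
have Hfg : ehfun f cA = ehfun g cB.
  have E1 := ehmor f HA; have E2 := ehmor g HB.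
  have Ee : (fun k => ehfun f (proj1_sig (a k)).1) = (fun k => ehfun g (proj1_sig (a k)).2).
    apply: functional_extensionality_dep => k; exact: (proj2_sig (a k)).
  by move: E1; rewrite Ee E2 => -[].
exists (exist (fun p : pcar (em_alg A) _ * pcar (em_alg B) _ => ehfun f p.1 = ehfun g p.2) (cA, cB) Hfg).
by case.
Qed.

Definition pb_model : ea_model T := @mk_model T pXc bool pA pphi pinj pclos.
Definition pbp1 : Hom (c := MC) pb_model A := @mk_phi_hom T pXc bool pA pphi pinj pclos true.
Definition pbp2 : Hom (c := MC) pb_model B := @mk_phi_hom T pXc bool pA pphi pinj pclos false.

Lemma pb_model_pullback : is_pullback (C := MC) f g pbp1 pbp2.
Proof.
split.
  apply: mhom_ext => s x; exact: (proj2_sig x).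
move=> Q q1 q2 Hq.
have Hq' := mhom_eqP Hq.
pose u (s : sort) (x : pcar (em_alg Q) s) : pXc s :=
  exist (fun p : pcar (em_alg A) s * pcar (em_alg B) s => ehfun f p.1 = ehfun g p.2)
     (ehfun q1 x, ehfun q2 x) (Hq' s x).
have Hh : forall i o a b, pop (em_alg Q) o a = Some b ->
     pop (em_alg (pA i)) o (fun k => pphi i (u _ (a k))) = Some (pphi i (u _ b)).
  by case=> o a b Hab /=; apply: ehmor.
exists (@mk_into T pXc bool pA pphi pinj pclos Q u Hh); split.
  by split; apply: mhom_ext.
move=> v Hv1 Hv2; apply: mhom_ext => s x; apply: pinj; case => /=.
  by rewrite -Hv1.
by rewrite -Hv2.
Qed.
End PB.

Lemma model_fc : finitely_complete MC.
Proof.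
split; first by exists term_model; exact: term_model_terminal.
move=> A B D f g; exists (pb_model f g), (pbp1 f g), (pbp2 f g); exact: pb_model_pullback.
Qed.
End MFC.

Section Ess.
Variable M : SEMatrix.
Local Notation VC := (VarietyCat (T0 M)).

Definition sigE : ea_signature :=
  @EASig unit bool (fun o => 'I_(sar (s := sig0 M) o)) (fun _ _ => tt) (fun _ => tt).

Definition eqnE (i : 'I_(rows M)) : ea_equation (Sg := sigE) (fun _ => 'I_(nvars M)) :=
  @EAEq sigE (fun _ => 'I_(nvars M)) tt
    (@eapp sigE (fun _ => 'I_(nvars M)) true (fun j => @evar sigE (fun _ => 'I_(nvars M)) tt (ent M i j)))
    (@evar sigE (fun _ => 'I_(nvars M)) tt (rcol M i)).

Definition TE : ea_theory :=
  @EATh sigE (fun _ => True) 'I_(rows M) (fun _ _ => 'I_(nvars M)) eqnE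
    (fun _ => Empty_set) (fun o d => match d with end) (fun o d => match d with end).

Local Notation MC := (ModelCat TE).

Definition FpalgE (X : valgebra (T0 M)) : ea_palg sigE :=
  @EAPAlg sigE (fun _ => acar X) (fun o a => Some (aop X o a)).

Lemma Fmodel (X : valgebra (T0 M)) : is_ea_model (T := TE) (FpalgE X).
Proof.
split; last split.
- by [].
- by move=> o a H; exfalso; apply: H.
- move=> i rho b1 b2 H1 H2.
  have [vals [Hv Hp]] := peval_inv H1.
  have E2 := peval_inv H2; simpl in E2; subst b2.
  move: Hp => /= [<-].
  rewrite -(T0_eq (X := X) (fun v => rho tt v)); congr (aop X true).
  apply: functional_extensionality => j; exact: (peval_inv (Hv j)).
Qed.

Definition FobjE (X : valgebra (T0 M)) : ea_model TE := @EAMod TE (FpalgE X) (Fmodel X).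

Definition FmapE (X Y : valgebra (T0 M)) (f : Hom (c := VC) X Y) : Hom (c := MC) (FobjE X) (FobjE Y).
Proof.
refine (@EAHom TE (FobjE X) (FobjE Y) (fun s x => vhfun f x) _).
by move=> o a b [<-] /=; rewrite vhmor.
Defined.

Definition FE : Functor VC MC.
Proof.
refine (@Fun VC MC FobjE FmapE _ _).
  by move=> A; apply: ea_hom_eq.
by move=> *; apply: ea_hom_eq.
Defined.

Section Back.
Variable Y : ea_model TE.

Definition tval (o : bool) (a : 'I_(sar (s := sig0 M) o) -> pcar (em_alg Y) tt) : pcar (em_alg Y) tt :=
  match pop (em_alg Y) o a as x return x <> None -> pcar (em_alg Y) tt with
  | Some v => fun _ => v
  | None => fun H => False_rect _ (H erefl)
  end ((proj1 (em_model Y)) o a I).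

Lemma tval_spec o a : pop (em_alg Y) o a = Some (tval a).
Proof.
rewrite /tval; move: ((proj1 (em_model Y)) o a I).
by case: (pop (em_alg Y) o a).
Qed.

Definition idc (s : unit) : pcar (em_alg Y) tt -> pcar (em_alg Y) s :=
  match s as s0 return pcar (em_alg Y) tt -> pcar (em_alg Y) s0 with tt => id end.
Definition idc' (s : unit) : pcar (em_alg Y) s -> pcar (em_alg Y) tt :=
  match s as s0 return pcar (em_alg Y) s0 -> pcar (em_alg Y) tt with tt => id end.

Definition BackAlg : valgebra (T0 M).
Proof.
refine (@VAlg (T0 M) (pcar (em_alg Y) tt) tval _).
move=> i rho /=.
have H := (proj2 (proj2 (em_model Y))) i (fun s v => idc s (rho (val v))).
apply: (H (tval (o := true) (fun j => rho (val (ent M i j)))) (rho (val (rcol M i)))).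
  simpl; apply: (@pev_app sigE (em_alg Y) (fun _ => 'I_(nvars M)) (fun s v => idc s (rho (val v))) true _ (fun j => rho (val (ent M i j)))); last exact: tval_spec.
  move=> j; exact: (@pev_var sigE (em_alg Y) (fun _ => 'I_(nvars M)) (fun s v => idc s (rho (val v))) tt (ent M i j)).
simpl; exact: (@pev_var sigE (em_alg Y) (fun _ => 'I_(nvars M)) (fun s v => idc s (rho (val v))) tt (rcol M i)).
Defined.

Definition isoF : Hom (c := MC) (FobjE BackAlg) Y.
Proof.
refine (@EAHom TE (FobjE BackAlg) Y idc _).
move=> o a b [<-] /=; exact: tval_spec.
Defined.

Definition isoB : Hom (c := MC) Y (FobjE BackAlg).
Proof.
refine (@EAHom TE Y (FobjE BackAlg) idc' _).
move=> o a b /= H; congr Some; rewrite tval_spec in H; by case: H.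
Defined.

Lemma iso_ok : is_iso isoF.
Proof.
exists isoB; split; apply: ea_hom_eq; apply: functional_extensionality_dep => -[];
  by apply: functional_extensionality.
Qed.
End Back.

Lemma essalg_T0 : cls_essalg VC.
Proof.
exists TE, FE; split; last split.
- move=> A B g.
  have Hm : forall o args, ehfun g (s := tt) (aop A o args) = aop B o (fun i => ehfun g (s := tt) (args i)).
    move=> o args; have := ehmor g (o := o) (a := args) (b := aop A o args) erefl.
    by move=> [].
  exists (@mkhom (T0 M) A B (fun x => ehfun g (s := tt) x) Hm).
  by apply: ea_hom_eq; apply: functional_extensionality_dep => -[].
- move=> A B f f' E; apply: vhom_eq.
  apply: functional_extensionality => x.
  exact: (f_equal (fun h : Hom (c := MC) (FobjE A) (FobjE B) => @ehfun TE _ _ h tt x) E).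
- move=> Y; exists (BackAlg Y), (isoF Y); exact: iso_ok.
Qed.

Definition IdF (C : Category) : Functor C C :=
  @Fun C C (fun X => X) (fun A B f => f) (fun _ => erefl) (fun _ _ _ _ _ => erefl).

Lemma alg_T0 : cls_alg VC.
Proof.
exists (T0 M), (IdF VC); split; last split.
- by move=> A B g; exists g.
- by [].
- move=> Y; exists Y, (idm Y); exists (idm Y); by rewrite comp_idl.
Qed.
End Ess.

Lemma equivK (M : SEMatrix) (n' : nat) (K : Category -> Prop) :
  2 <= n' -> 1 <= rows M ->
  (forall C, K C -> finitely_complete C) ->
  K (VarietyCat (T0 M)) ->
  implies_in K M (Cube n') <-> condK M n'.
Proof.
move=> Hn Hr HK H0; split.
  move=> H; apply: NNPP => nK.
  apply: (notcube_T0 Hn Hr nK); apply: H => //; exact: Mclosed_T0.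
move=> HcK C KC; exact: K_implies_cube (HK C KC) HcK.
Qed.

Theorem theorem2p3 (M : SEMatrix) (n' : nat) :
  1 <= rows M -> 1 <= nvars M -> 2 <= n' ->
  [<-> implies_in cls_lex M (Cube n');
       implies_in (cls_pt cls_lex) M (Cube n');
       implies_in cls_reg M (Cube n');
       implies_in (cls_pt cls_reg) M (Cube n');
       implies_in cls_alg M (Cube n');
       implies_in (cls_pt cls_alg) M (Cube n');
       implies_in cls_essalg M (Cube n');
       implies_in (cls_pt cls_essalg) M (Cube n');
       implies_in cls_regessalg M (Cube n');
       implies_in (cls_pt cls_regessalg) M (Cube n');
       exists idx : 'I_n' -> 'I_(rows M),
         ~ exists j : 'I_(lcols M), forall a : 'I_n', ent M (idx a) j = rcol M (idx a);
       ~ exists p : {ffun 'I_(lcols M) -> bool} -> bool,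
           VM_algebra_bool M p /\ compatible_Rn M n' p].
Proof.
move=> Hr Hv Hn.
have Hreg := var_regular (T0 M).
have Hpt := pointed_T0 Hr.
have Hfc := proj1 Hreg.
have fc_alg : forall C, cls_alg C -> finitely_complete C.
  by move=> C [T HT]; exact: equiv_fc HT (var_fc T).
have fc_ess : forall C, cls_essalg C -> finitely_complete C.
  by move=> C [T HT]; exact: equiv_fc HT (model_fc T).
have E1 := @equivK M n' cls_lex Hn Hr (fun C H => H) Hfc.
have E2 := @equivK M n' (cls_pt cls_lex) Hn Hr (fun C H => proj1 H) (conj Hfc Hpt).
have E3 := @equivK M n' cls_reg Hn Hr (fun C H => proj1 H) Hreg.
have E4 := @equivK M n' (cls_pt cls_reg) Hn Hr (fun C H => proj1 (proj1 H)) (conj Hreg Hpt).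
have E5 := @equivK M n' cls_alg Hn Hr fc_alg (alg_T0 M).
have E6 := @equivK M n' (cls_pt cls_alg) Hn Hr (fun C H => fc_alg C (proj1 H)) (conj (alg_T0 M) Hpt).
have E7 := @equivK M n' cls_essalg Hn Hr fc_ess (essalg_T0 M).
have E8 := @equivK M n' (cls_pt cls_essalg) Hn Hr (fun C H => fc_ess C (proj1 H)) (conj (essalg_T0 M) Hpt).
have E9 := @equivK M n' cls_regessalg Hn Hr (fun C H => proj1 (proj2 H)) (conj (essalg_T0 M) Hreg).
have E10 := @equivK M n' (cls_pt cls_regessalg) Hn Hr (fun C H => proj1 (proj2 (proj1 H)))
   (conj (conj (essalg_T0 M) Hreg) Hpt).
have E12 : condL M n' <-> condK M n' by split; [exact: L_K|exact: K_L].
rewrite /condK /condL in E1 E2 E3 E4 E5 E6 E7 E8 E9 E10 E12.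
tfae.
- by move/E1/E2.
- by move/E2/E3.
- by move/E3/E4.
- by move/E4/E5.
- by move/E5/E6.
- by move/E6/E7.
- by move/E7/E8.
- by move/E8/E9.
- by move/E9/E10.
- by move/E10.
- by move/E12.
- by move/E12/E1.
Qed.
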